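(* Let $n\geqslant0$, $q=3^{2n+1}$, $A=\{\alpha-\alpha^{3^{n+1}}:\alpha\in\mathbb{F}_q\}$, and let $T\subseteq\mathbb{F}_q^\times$. Then $$\dim_{\mathbb{F}_3}\Big(\bigcap_{t\in T}tA\Big)+\dim_{\mathbb{F}_3}\big(\mathrm{span}_{\mathbb{F}_3}(T^{-1})\big)=2n+1.$$
   Context: For $t\in\mathbb{F}_q$, $tA=\{ta:a\in A\}$, an $\mathbb{F}_3$-subspace of $\mathbb{F}_q$; $T^{-1}=\{t^{-1}:t\in T\}$ and $\mathrm{span}_{\mathbb{F}_3}(T^{-1})$ is the $\mathbb{F}_3$-subspace it spans. An intersection over an empty index set is $\mathbb{F}_q$. *)

(* Defs.v *)
From mathcomp Require Import all_boot all_order all_algebra all_field.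
Set Implicit Arguments. Unset Strict Implicit. Unset Printing Implicit Defensive.
Import GRing.Theory.
Local Open Scope ring_scope.

Definition Aset (F : finFieldType) (n : nat) : {set F} :=
  [set a - a ^+ (3 ^ n.+1)%N | a : F].

Definition scale_set (F : finFieldType) (t : F) (S : {set F}) : {set F} :=
  [set t * a | a in S].

Definition inv_set (F : finFieldType) (T : {set F}) : {set F} :=
  [set t^-1 | t in T].

(* F is viewed as an 'F_3-vector space via pPrimeCharType (needs char F = 3).
   F3span S = the 'F_3-subspace of F spanned by S; for S already an
   'F_3-subspace this is S itself. *)
Definition F3span (F : finFieldType) (h3 : 3%N \in [pchar F]) (S : {set F})
  : {vspace pPrimeCharType h3} :=
  <<(enum S : seq (pPrimeCharType h3))>>%VS.

(* Main.v *)
Require Import Defs.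
From HB Require Import structures.
From mathcomp Require Import all_boot all_order all_algebra all_field.
From mathcomp Require Import ring zify.
Set Implicit Arguments. Unset Strict Implicit. Unset Printing Implicit Defensive.
Import GRing.Theory.
Local Open Scope ring_scope.

Lemma frobD (F : finFieldType) (h3 : 3%N \in [pchar F]) j (x y : F) :
  (x + y) ^+ (3 ^ j) = x ^+ (3 ^ j) + y ^+ (3 ^ j).
Proof.
apply: exprDn_pchar; rewrite pnatX pnatE ?h3 //.
Qed.

Lemma frobN (F : finFieldType) (h3 : 3%N \in [pchar F]) j (x : F) :
  (- x) ^+ (3 ^ j) = - x ^+ (3 ^ j).
Proof.
apply: exprNn_pchar; rewrite pnatX pnatE ?h3 //.
Qed.

Lemma frob_nat (F : finFieldType) (h3 : 3%N \in [pchar F]) j k :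
  (k%:R : F) ^+ (3 ^ j) = k%:R.
Proof.
elim: j => [|j IH]; first by rewrite expn0 expr1.
by rewrite expnS exprM -(pFrobenius_autE h3) pFrobenius_aut_nat IH.
Qed.

Definition Lmap (n : nat) (F : finFieldType) (h3 : 3%N \in [pchar F])
  (a : pPrimeCharType h3) : pPrimeCharType h3 := a - a ^+ (3 ^ n.+1).

Lemma Lmap_lin n (F : finFieldType) (h3 : 3%N \in [pchar F]) : linear (@Lmap n F h3).
Proof.
move=> c u v; rewrite /Lmap.
have -> : c *: u = (c : nat)%:R * (u : F) by [].
have -> : c *: (u - u ^+ (3 ^ n.+1)) = (c : nat)%:R * ((u : F) - u ^+ (3 ^ n.+1)) by [].
rewrite (frobD h3) exprMn (frob_nat h3).
change ((c : nat)%:R * (u : F) + v - ((c : nat)%:R * u ^+ (3 ^ n.+1) + v ^+ (3 ^ n.+1)) =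
  (c : nat)%:R * ((u : F) - u ^+ (3 ^ n.+1)) + (v - v ^+ (3 ^ n.+1))).
ring.
Qed.

HB.instance Definition _ n (F : finFieldType) (h3 : 3%N \in [pchar F]) :=
  GRing.isLinear.Build 'F_3 (pPrimeCharType h3) (pPrimeCharType h3) *:%R (@Lmap n F h3) (@Lmap_lin n F h3).


Definition mulL (F : finFieldType) (h3 : 3%N \in [pchar F]) (u x : pPrimeCharType h3)
  : pPrimeCharType h3 := u * x.

Lemma mulL_lin (F : finFieldType) (h3 : 3%N \in [pchar F]) u : linear (@mulL F h3 u).
Proof. by move=> c x y; rewrite /mulL mulrDr scalerAr. Qed.

HB.instance Definition _ (F : finFieldType) (h3 : 3%N \in [pchar F]) u :=
  GRing.isLinear.Build 'F_3 (pPrimeCharType h3) (pPrimeCharType h3) *:%R (@mulL F h3 u) (@mulL_lin F h3 u).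

Definition Avs n (F : finFieldType) (h3 : 3%N \in [pchar F]) : {vspace pPrimeCharType h3} :=
  limg (linfun (@Lmap n F h3)).

Lemma memAvs n (F : finFieldType) (h3 : 3%N \in [pchar F]) (x : pPrimeCharType h3) :
  (x \in Aset F n) = (x \in Avs n h3).
Proof.
apply/imsetP/memv_imgP => [[a _ ->]|[a _ ->]].
  by exists a; rewrite ?memvf // lfunE.
by exists a => //; rewrite lfunE.
Qed.

Lemma dimV n (F : finFieldType) (h3 : 3%N \in [pchar F])
  (hq : #|F| = (3 ^ (2 * n + 1))%N) : \dim {: pPrimeCharType h3} = (2 * n + 1)%N.
Proof.
have h : #|(fullv : {vspace pPrimeCharType h3})| = #|F|.
  by apply: eq_card => v; rewrite memvf.
rewrite card_vspace card_Fp // in h.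
apply/eqP; rewrite -(@eqn_exp2l 3) //; apply/eqP; rewrite h.
exact: hq.
Qed.

Lemma fix_cube n (F : finFieldType) (hq : #|F| = (3 ^ (2 * n + 1))%N) (x : F) :
  x ^+ (3 ^ n.+1) = x -> x ^+ 3 = x.
Proof.
move=> hx.
have hc : x ^+ (3 ^ (2 * n + 1)) = x by rewrite -hq expf_card.
have e : (3 ^ (2 * n + 1) * 3 = 3 ^ n.+1 * 3 ^ n.+1)%N.
  by rewrite -expnSr -expnD; congr (_ ^ _)%N; lia.
by rewrite -{1}hc -exprM e exprM hx hx.
Qed.

Lemma kerL n (F : finFieldType) (h3 : 3%N \in [pchar F])
  (hq : #|F| = (3 ^ (2 * n + 1))%N) :
  lker (linfun (@Lmap n F h3)) = <[1]>%VS.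
Proof.
apply/vspaceP => x; rewrite memv_ker lfunE /Lmap subr_eq0.
apply/eqP/vlineP => [hx|[k ->]].
  have h3x : (x : F) ^+ 3 = x by apply: (fix_cube hq); rewrite -hx.
  have : (x : F) * (x - 1) * (x + 1) = 0.
    have -> : (x : F) * (x - 1) * (x + 1) = x ^+ 3 - x.
      by ring.
    by rewrite h3x subrr.
  move/eqP; rewrite !mulf_eq0 subr_eq0 addr_eq0 => /orP[/orP[]|] /eqP hx'.
  - by exists 0; rewrite scale0r hx'.
  - by exists 1; rewrite scale1r hx'.
  - by exists (-1); rewrite scaleN1r hx'.
have -> : k *: (1 : pPrimeCharType h3) = (k : nat)%:R * 1 by [].
by rewrite mulr1 (frob_nat h3).
Qed.

Lemma dimA n (F : finFieldType) (h3 : 3%N \in [pchar F])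
  (hq : #|F| = (3 ^ (2 * n + 1))%N) : \dim (Avs n h3) = (2 * n)%N.
Proof.
have := limg_ker_dim (linfun (@Lmap n F h3)) fullv.
rewrite capfv kerL // dim_vline oner_neq0 (dimV h3 hq) /Avs add1n => h.
by move: h; rewrite addn1 => -[].
Qed.

Definition Ipred n (F : finFieldType) (h3 : 3%N \in [pchar F])
  (W : {vspace pPrimeCharType h3}) : pred (pPrimeCharType h3) :=
  fun x => [forall w, (w \in W) ==> (x * w \in Avs n h3)].

Definition Ivs n (F : finFieldType) (h3 : 3%N \in [pchar F])
  (W : {vspace pPrimeCharType h3}) : {vspace pPrimeCharType h3} :=
  <<enum (Ipred n W)>>%VS.

Lemma memIvs n (F : finFieldType) (h3 : 3%N \in [pchar F])
  (W : {vspace pPrimeCharType h3}) x :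
  reflect (forall w, w \in W -> x * w \in Avs n h3) (x \in Ivs n W).
Proof.
have Pe : forall y, reflect (forall w, w \in W -> y * w \in Avs n h3) (Ipred n W y).
  move=> y; apply: (iffP forallP) => [h w hw|h w]; first by move/implyP: (h w); apply.
  by apply/implyP; apply: h.
apply: (iffP idP) => [hx|hx]; last by apply: memv_span; rewrite mem_enum; apply/Pe.
apply/Pe; rewrite (coord_span hx).
apply: (big_ind (Ipred n W)).
- by apply/Pe => w _; rewrite mul0r mem0v.
- move=> a b /Pe ha /Pe hb; apply/Pe => w hw; rewrite mulrDl memvD ?ha ?hb //.
- move=> i _; apply/Pe => w hw; rewrite -scalerAl memvZ //.
  have : (in_tuple (enum (Ipred n W)))`_i \in enum (Ipred n W) by apply: (mem_nth 0); rewrite size_tuple -cardE; exact: (ltn_ord i).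
  by rewrite mem_enum => /Pe; apply.
Qed.

Lemma IvsD n (F : finFieldType) (h3 : 3%N \in [pchar F])
  (W1 W2 : {vspace pPrimeCharType h3}) :
  Ivs n (W1 + W2)%VS = (Ivs n W1 :&: Ivs n W2)%VS.
Proof.
apply/vspaceP => x; rewrite memv_cap.
apply/memIvs/andP => [h|[/memIvs h1 /memIvs h2] w /memv_addP[w1 hw1 [w2 hw2 ->]]].
  split; apply/memIvs => w hw; apply: h.
    exact: (subvP (addvSl W1 W2)).
  exact: (subvP (addvSr W1 W2)).
by rewrite mulrDr; apply: memvD; [apply: h1 | apply: h2].
Qed.

Lemma Ivs0 n (F : finFieldType) (h3 : 3%N \in [pchar F]) :
  Ivs n (0%VS : {vspace pPrimeCharType h3}) = fullv.
Proof.
apply/vspaceP => x; rewrite memvf; apply/memIvs => w.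
by rewrite memv0 => /eqP ->; rewrite mulr0 mem0v.
Qed.

Lemma Ivsf n (F : finFieldType) (h3 : 3%N \in [pchar F])
  (hq : #|F| = (3 ^ (2 * n + 1))%N) :
  Ivs n (fullv : {vspace pPrimeCharType h3}) = 0%VS.
Proof.
apply/vspaceP => x; rewrite memv0; apply/memIvs/eqP => [h|->]; last first.
  by move=> w _; rewrite mul0r mem0v.
apply/eqP; apply/negP => /negP nx.
have : (fullv <= Avs n h3)%VS.
  apply/subvP => z _; rewrite -(mulVKf nx z); apply: h; exact: memvf.
move/dimvS; rewrite (dimV h3 hq) (dimA h3 hq); lia.
Qed.

Lemma Ivs_line n (F : finFieldType) (h3 : 3%N \in [pchar F])
  (hq : #|F| = (3 ^ (2 * n + 1))%N) (w : pPrimeCharType h3) :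
  (2 * n <= \dim (Ivs n <[w]>))%N.
Proof.
have [->|nw] := eqVneq w 0.
  have -> : Ivs n <[0 : pPrimeCharType h3]>%VS = fullv.
    apply/vspaceP => x; rewrite memvf; apply/memIvs => v /vlineP[k ->].
    by rewrite scaler0 mulr0 mem0v.
  by rewrite (dimV h3 hq); lia.
pose ML := linfun (@mulL F h3 w^-1).
have sub : (ML @: Avs n h3 <= Ivs n <[w]>)%VS.
  apply/subvP => y /memv_imgP[a ha ->]; rewrite lfunE /mulL.
  apply/memIvs => v /vlineP[k ->].
  by rewrite -scalerAr mulrAC mulVf // mul1r memvZ.
have e : \dim (ML @: Avs n h3) = \dim (Avs n h3).
  apply: limg_dim_eq; apply/eqP; rewrite -subv0; apply/subvP => x.
  rewrite memv_cap memv_ker lfunE /mulL mulf_eq0 invr_eq0 (negbTE nw) /= memv0.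
  by case/andP.
by rewrite -(dimA h3 hq) -e; apply: dimvS.
Qed.

Lemma Ivs_lower n (F : finFieldType) (h3 : 3%N \in [pchar F])
  (hq : #|F| = (3 ^ (2 * n + 1))%N) (s : seq (pPrimeCharType h3)) :
  (2 * n + 1 <= \dim (Ivs n <<s>>) + size s)%N.
Proof.
elim: s => [|x s IH].
  by rewrite span_nil Ivs0 (dimV h3 hq) addn0.
rewrite span_cons IvsD /=.
have h1 := dimv_sum_cap (Ivs n <[x]>) (Ivs n <<s>>).
have h2 : (\dim (Ivs n <[x]> + Ivs n <<s>>) <= 2 * n + 1)%N.
  by rewrite -(dimV h3 hq); apply: dimvS; apply: subvf.
have h3' := Ivs_line hq x.
lia.
Qed.

Lemma Ivs_dim n (F : finFieldType) (h3 : 3%N \in [pchar F])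
  (hq : #|F| = (3 ^ (2 * n + 1))%N) (W : {vspace pPrimeCharType h3}) :
  (\dim (Ivs n W) + \dim W = 2 * n + 1)%N.
Proof.
have lowW := Ivs_lower hq (vbasis W).
rewrite size_tuple (span_basis (vbasisP W)) in lowW.
have lowC := Ivs_lower hq (vbasis W^C).
rewrite size_tuple (span_basis (vbasisP W^C)) dimv_compl (dimV h3 hq) in lowC.
have h1 := dimv_sum_cap (Ivs n W) (Ivs n W^C).
rewrite -IvsD addv_complf (Ivsf h3 hq) dimv0 addn0 in h1.
have h2 : (\dim (Ivs n W + Ivs n W^C) <= 2 * n + 1)%N.
  by rewrite -(dimV h3 hq); apply: dimvS; apply: subvf.
have h4 : (\dim W <= 2 * n + 1)%N.
  by rewrite -(dimV h3 hq); apply: dimvS; apply: subvf.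
lia.
Qed.

Lemma F3span_eq (F : finFieldType) (h3 : 3%N \in [pchar F]) (S : {set F})
  (U : {vspace pPrimeCharType h3}) :
  (forall x : pPrimeCharType h3, (x \in S) = (x \in U)) -> F3span h3 S = U.
Proof.
move=> hS; apply: subv_anti; apply/andP; split.
  by apply/span_subvP => x; rewrite mem_enum hS.
by apply/subvP => x; rewrite -hS => xS; apply: memv_span; rewrite mem_enum.
Qed.

Theorem lemma4p2 (n : nat) (F : finFieldType) (h3 : 3%N \in [pchar F])
  (hq : #|F| = (3 ^ (2 * n + 1))%N) (T : {set F}) (hT : 0 \notin T) :
  (\dim (F3span h3 (\bigcap_(t in T) scale_set t (Aset F n)))
   + \dim (F3span h3 (inv_set T)))%N = (2 * n + 1)%N.
Proof.
set W := F3span h3 (inv_set T).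
have nz : forall t, t \in T -> t != 0.
  by move=> t tT; apply: contraNneq hT => <-.
suff -> : F3span h3 (\bigcap_(t in T) scale_set t (Aset F n)) = Ivs n W.
  exact: Ivs_dim.
apply: F3span_eq => x.
apply/bigcapP/memIvs => [h w hw | h t tT].
  have sub : (W <= Ivs n <[x]>)%VS.
    apply/span_subvP => s; rewrite mem_enum => /imsetP[t tT ->].
    apply/memIvs => v /vlineP[k ->]; rewrite -scalerAr memvZ //.
    have := h t tT => /imsetP[a ha ->].
    by rewrite mulKf ?nz // -memAvs.
  have /memIvs hx := subvP sub w hw.
  have := hx x (memv_line x).
  by rewrite mulrC.
apply/imsetP; exists (t^-1 * x); last by rewrite mulVKf ?nz.
rewrite memAvs mulrC; apply: h; apply: memv_span; rewrite mem_enum.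
exact: imset_f.
Qed.
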